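(* Let $a,b,d,f,c\in\mathbb{C}$ with $b\neq0$ and $d\neq0$. Then for every orbit $(z_1(n),z_2(n))$ of the system, $(z_1(n))$ is bounded if and only if $(z_2(n))$ is bounded.
   Context: The 2D coupled quadratic system with connectivity matrix $A=\begin{pmatrix}a&b\\ d&f\end{pmatrix}$ and parameter $c\in\mathbb{C}$ is the iteration $z_1(n+1)=(az_1(n)+bz_2(n))^2+c$, $z_2(n+1)=(dz_1(n)+fz_2(n))^2+c$, $n\ge 0$, from an initial condition $(z_1(0),z_2(0))\in\mathbb{C}^2$. *)

(* Defs.v *)
From Stdlib Require Import Reals.
From Coquelicot Require Import Coquelicot.
Open Scope R_scope.

Fixpoint orbit (a b d f c : C) (z0 : C * C) (n : nat) : C * C :=
  match n with
  | O => z0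
  | S m =>
      let z := orbit a b d f c z0 m in
      (Cplus (Cmult (Cplus (Cmult a (fst z)) (Cmult b (snd z)))
                    (Cplus (Cmult a (fst z)) (Cmult b (snd z)))) c,
       Cplus (Cmult (Cplus (Cmult d (fst z)) (Cmult f (snd z)))
                    (Cplus (Cmult d (fst z)) (Cmult f (snd z)))) c)
  end.

Definition bounded_seq (u : nat -> C) : Prop :=
  exists M : R, forall n : nat, Cmod (u n) <= M.

(* Main.v *)
Require Import Defs.
From Stdlib Require Import Reals.
From Coquelicot Require Import Coquelicot.
From Stdlib Require Import Lra Psatz.

Lemma key (p q c : C) (x y : nat -> C) : q <> 0%C ->
  (forall n, x (S n) = Cplus (Cmult (Cplus (Cmult p (x n)) (Cmult q (y n)))
                                    (Cplus (Cmult p (x n)) (Cmult q (y n)))) c) ->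
  bounded_seq x -> bounded_seq y.
Proof.
  intros Hq Hx [M HM].
  assert (Hqp : 0 < Cmod q) by (apply Cmod_gt_0; auto).
  exists ((M + Cmod c + 1 + Cmod p * M) / Cmod q).
  intro n.
  set (w := Cplus (Cmult p (x n)) (Cmult q (y n))).
  assert (E1 : Cmult w w = Cplus (x (S n)) (Copp c)).
  { rewrite (Hx n). fold w. ring. }
  assert (B1 : Cmod w * Cmod w <= M + Cmod c).
  { rewrite <- Cmod_mult, E1. eapply Rle_trans. apply Cmod_triangle.
    rewrite Cmod_opp. specialize (HM (S n)). lra. }
  assert (B2 : Cmod w <= M + Cmod c + 1).
  { pose proof (Cmod_ge_0 w). nra. }
  assert (E2 : Cmult q (y n) = Cplus w (Copp (Cmult p (x n)))).
  { unfold w. ring. }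
  assert (B3 : Cmod q * Cmod (y n) <= M + Cmod c + 1 + Cmod p * M).
  { rewrite <- Cmod_mult, E2. eapply Rle_trans. apply Cmod_triangle.
    rewrite Cmod_opp, Cmod_mult. specialize (HM n).
    pose proof (Cmod_ge_0 p). nra. }
  apply Rmult_le_reg_l with (Cmod q); auto.
  replace (Cmod q * ((M + Cmod c + 1 + Cmod p * M) / Cmod q))
    with (M + Cmod c + 1 + Cmod p * M) by (field; lra). lra.
Qed.

Theorem mainTheorem6 (a b d f c : C) (z0 : C * C) :
  b <> 0%C -> d <> 0%C ->
  (bounded_seq (fun n => fst (orbit a b d f c z0 n)) <->
   bounded_seq (fun n => snd (orbit a b d f c z0 n))).
Proof.
  intros Hb Hd. split.
  - apply (key a b c); auto.
  - apply (key f d c); auto. intro n. simpl.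
    rewrite (Cplus_comm (Cmult d _)). reflexivity.
Qed.
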